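(* Let $S$ be an inverse semigroup that is a mirror semigroup, with semilattice of idempotents $\Sigma$. Then $S$ is stably continuous if and only if $\Sigma$ is stably continuous.
   Context: An inverse semigroup is a semigroup $S$ in which every $s$ has a unique $s^*$ with $ss^*s=s$ and $s^*ss^*=s^*$. $\Sigma=\Sigma(S)$ is the set of idempotents (itself an inverse semigroup, a semilattice). The intrinsic order is $s\leqslant t$ iff $s=t\epsilon$ for some idempotent $\epsilon$. A subset is directed if nonempty and any two elements have an upper bound in it. $S$ is a mirror semigroup if every directed subset of $\Sigma$ having a supremum in $(\Sigma,\leqslant)$ also has a supremum in $(S,\leqslant)$. In a poset, $x$ is way-below $y$ ($x\ll y$) if for every directed subset $D$ that has a supremum with $y\leqslant \sup D$, there is $d\in D$ with $x\leqslant d$. A poset is continuous if for every $s$ the set $\{t : t\ll s\}$ is directed with supremum $s$. An inverse semigroup $T$ is stably continuous if $(T,\leqslant)$ is continuous and its way-below relation $\ll$ is multiplicative, i.e. $s\ll t$ and $s'\ll t'$ imply $ss'\ll tt'$. For $\Sigma$ these notions are taken with respect to the poset $(\Sigma,\leqslant)$ and its own way-below relation. *)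

(* Defs.v *)
Section Defs.
Context {S : Type} (mul : S -> S -> S).

Definition inverse_semigroup : Prop :=
  (forall x y z, mul x (mul y z) = mul (mul x y) z) /\
  (forall s, exists! t, mul (mul s t) s = s /\ mul (mul t s) t = t).

Definition idem (e : S) : Prop := mul e e = e.

Definition ileq (s t : S) : Prop := exists e, idem e /\ s = mul t e.

(* Order-theoretic notions for the poset (C, ileq) where C is a carrier
   subset (C = everything for S, C = idem for Sigma with restricted order). *)
Definition directed (C : S -> Prop) (D : S -> Prop) : Prop :=
  (forall d, D d -> C d) /\ (exists d, D d) /\
  (forall x y, D x -> D y -> exists z, D z /\ ileq x z /\ ileq y z).

Definition is_sup (C : S -> Prop) (D : S -> Prop) (s : S) : Prop :=
  C s /\ (forall d, D d -> ileq d s) /\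
  (forall u, C u -> (forall d, D d -> ileq d u) -> ileq s u).

Definition way_below (C : S -> Prop) (x y : S) : Prop :=
  forall D s, directed C D -> is_sup C D s -> ileq y s ->
    exists d, D d /\ ileq x d.

Definition continuous (C : S -> Prop) : Prop :=
  forall s, C s ->
    directed C (fun t => C t /\ way_below C t s) /\
    is_sup C (fun t => C t /\ way_below C t s) s.

Definition wb_multiplicative (C : S -> Prop) : Prop :=
  forall s t s' t', C s -> C t -> C s' -> C t' ->
    way_below C s t -> way_below C s' t' ->
    way_below C (mul s s') (mul t t').

Definition stably_continuous (C : S -> Prop) : Prop :=
  continuous C /\ wb_multiplicative C.

Definition allS (_ : S) : Prop := True.

Definition mirror : Prop :=
  forall D, directed idem D -> (exists s, is_sup idem D s) ->
    exists s, is_sup allS D s.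

End Defs.

(* Main.v *)
Require Import Defs.
From Stdlib Require Import IndefiniteDescription.

Section Alg.
Context {S : Type} (mul : S -> S -> S) (H : inverse_semigroup mul).
Local Infix "∙" := mul (at level 40, left associativity).

Lemma assoc x y z : x ∙ (y ∙ z) = x ∙ y ∙ z.
Proof. apply (proj1 H). Qed.

Definition isinv s t := s ∙ t ∙ s = s /\ t ∙ s ∙ t = t.

Lemma inv_ex s : exists t, isinv s t.
Proof. destruct (proj2 H s) as [t [Ht _]]. exists t. exact Ht. Qed.

Lemma inv_uniq s t1 t2 : isinv s t1 -> isinv s t2 -> t1 = t2.
Proof.
  intros H1 H2. destruct (proj2 H s) as [t [Ht U]].
  rewrite <- (U t1 H1), <- (U t2 H2). reflexivity.
Qed.

Definition star (s : S) : S :=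
  proj1_sig (constructive_indefinite_description _ (inv_ex s)).

Lemma star_inv s : isinv s (star s).
Proof. unfold star. destruct (constructive_indefinite_description _ _). exact i. Qed.

Lemma sss s : s ∙ star s ∙ s = s.  Proof. apply star_inv. Qed.
Lemma s's' s : star s ∙ s ∙ star s = star s.  Proof. apply star_inv. Qed.
Lemma sss_p a s : a ∙ s ∙ star s ∙ s = a ∙ s.
Proof. rewrite <- !assoc, (assoc s), sss. reflexivity. Qed.
Lemma s's'_p a s : a ∙ star s ∙ s ∙ star s = a ∙ star s.
Proof. rewrite <- !assoc, (assoc (star s)), s's'. reflexivity. Qed.

Lemma idem_p a e : idem mul e -> a ∙ e ∙ e = a ∙ e.
Proof. intro He. rewrite <- assoc, He. reflexivity. Qed.

Lemma idem_mul0 e f : idem mul e -> idem mul f -> idem mul (e ∙ f).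
Proof.
  intros He Hf. unfold idem in *.
  set (x := star (e ∙ f)).
  assert (Hx : isinv (e ∙ f) x) by apply star_inv.
  assert (Hy : isinv (e ∙ f) (f ∙ x ∙ e)).
  { destruct Hx as [H1 H2]. split.
    - transitivity (e ∙ f ∙ x ∙ (e ∙ f)).
      + rewrite !assoc. rewrite <- (assoc e f f), Hf.
        rewrite <- (assoc _ e e), He. reflexivity.
      + exact H1.
    - transitivity (f ∙ (x ∙ (e ∙ f) ∙ x) ∙ e).
      + rewrite !assoc. rewrite <- (assoc _ e e), He.
        rewrite <- (assoc _ f f), Hf. reflexivity.
      + rewrite H2. reflexivity. }
  assert (Ex : x = f ∙ x ∙ e) by (apply (inv_uniq (e ∙ f)); assumption).
  assert (Ix : idem mul x).
  { unfold idem. transitivity (f ∙ (x ∙ (e ∙ f) ∙ x) ∙ e).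
    - rewrite Ex at 1 2. rewrite !assoc. reflexivity.
    - rewrite (proj2 Hx). symmetry; exact Ex. }
  assert (Eef : e ∙ f = x).
  { apply (inv_uniq x).
    - split; [exact (proj2 Hx) | exact (proj1 Hx)].
    - unfold isinv. rewrite Ix, Ix. split; reflexivity. }
  rewrite Eef. exact Ix.
Qed.

Lemma idem_inv e : idem mul e -> isinv e e.
Proof. intro He. unfold isinv. rewrite He, He. split; reflexivity. Qed.

Lemma idem_comm e f : idem mul e -> idem mul f -> e ∙ f = f ∙ e.
Proof.
  intros He Hf.
  pose proof (idem_mul0 e f He Hf) as Ief.
  pose proof (idem_mul0 f e Hf He) as Ife.
  unfold idem in *.
  apply (inv_uniq (e ∙ f)).
  - apply idem_inv. exact Ief.
  - split.
    + rewrite !assoc. rewrite <- (assoc e f f), Hf.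
      rewrite <- (assoc _ e e), He.
      rewrite <- assoc. exact Ief.
    + rewrite !assoc. rewrite <- (assoc f e e), He.
      rewrite <- (assoc _ f f), Hf.
      rewrite <- assoc. exact Ife.
Qed.

Ltac norm := repeat rewrite assoc.

Lemma comm_p a e f : idem mul e -> idem mul f -> a ∙ e ∙ f = a ∙ f ∙ e.
Proof. intros He Hf. rewrite <- !assoc, (idem_comm e f He Hf). reflexivity. Qed.

Lemma star_idem e : idem mul e -> star e = e.
Proof. intro He. apply (inv_uniq e). apply star_inv. apply idem_inv, He. Qed.

Lemma star_star s : star (star s) = s.
Proof. apply (inv_uniq (star s)). apply star_inv. split. apply s's'. apply sss. Qed.

Lemma idem_ss' s : idem mul (s ∙ star s).
Proof. unfold idem. rewrite assoc, sss. reflexivity. Qed.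
Lemma idem_s's s : idem mul (star s ∙ s).
Proof. unfold idem. rewrite assoc, s's'. reflexivity. Qed.

Lemma star_mul s t : star (s ∙ t) = star t ∙ star s.
Proof.
  apply (inv_uniq (s ∙ t)). apply star_inv. split.
  - transitivity (s ∙ (t ∙ star t) ∙ (star s ∙ s) ∙ t). norm; reflexivity.
    rewrite <- (assoc s), (idem_comm _ _ (idem_ss' t) (idem_s's s)). norm.
    rewrite sss. rewrite sss_p. reflexivity.
  - transitivity (star t ∙ (star s ∙ s) ∙ (t ∙ star t) ∙ star s). norm; reflexivity.
    rewrite <- (assoc (star t)), (idem_comm _ _ (idem_s's s) (idem_ss' t)). norm.
    rewrite s's'. rewrite s's'_p. reflexivity.
Qed.

Lemma idem_mul e f : idem mul e -> idem mul f -> idem mul (e ∙ f).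
Proof. apply idem_mul0. Qed.

Lemma ileq_char s t : ileq mul s t <-> s = t ∙ (star s ∙ s).
Proof.
  split.
  - intros [e [He ->]]. rewrite star_mul, star_idem by exact He.
    transitivity (t ∙ ((star t ∙ t) ∙ e) ∙ e).
    + norm. rewrite sss. rewrite idem_p by exact He. reflexivity.
    + rewrite <- (idem_comm _ _ He (idem_s's t)). norm. reflexivity.
  - intro E. exists (star s ∙ s). split. apply idem_s's. exact E.
Qed.

Lemma ileq_refl s : ileq mul s s.
Proof. apply ileq_char. rewrite assoc, sss. reflexivity. Qed.

Lemma ileq_trans s t u : ileq mul s t -> ileq mul t u -> ileq mul s u.
Proof.
  intros [e [He ->]] [f [Hf ->]]. exists (f ∙ e). split.
  apply idem_mul; assumption. symmetry; apply assoc.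
Qed.

Lemma ileq_mul_l u s t : ileq mul s t -> ileq mul (u ∙ s) (u ∙ t).
Proof. intros [e [He ->]]. exists e. split. exact He. apply assoc. Qed.

Lemma idem_conj x f : idem mul f -> idem mul (star x ∙ f ∙ x).
Proof.
  intro Hf. unfold idem.
  transitivity (star x ∙ f ∙ (x ∙ star x) ∙ f ∙ x). norm; reflexivity.
  rewrite (comm_p _ _ _ Hf (idem_ss' x)). norm.
  rewrite s's'. rewrite idem_p by exact Hf. reflexivity.
Qed.

Lemma idem_left f x : idem mul f -> f ∙ x = x ∙ (star x ∙ f ∙ x).
Proof.
  intro Hf. transitivity (f ∙ (x ∙ star x) ∙ x). norm. rewrite sss_p. reflexivity.
  rewrite (idem_comm _ _ Hf (idem_ss' x)). norm. reflexivity.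
Qed.

Lemma ileq_idem_l f x : idem mul f -> ileq mul (f ∙ x) x.
Proof. intro Hf. exists (star x ∙ f ∙ x). split. apply idem_conj, Hf. apply idem_left, Hf. Qed.

Lemma ileq_mul_r u s t : ileq mul s t -> ileq mul (s ∙ u) (t ∙ u).
Proof.
  intros [e [He ->]]. rewrite <- assoc. apply ileq_mul_l. apply ileq_idem_l, He.
Qed.

Lemma ileq_mul s t s' t' : ileq mul s t -> ileq mul s' t' -> ileq mul (s ∙ s') (t ∙ t').
Proof.
  intros H1 H2. apply ileq_trans with (t ∙ s'). apply ileq_mul_r, H1. apply ileq_mul_l, H2.
Qed.

Lemma ileq_star s t : ileq mul s t -> ileq mul (star s) (star t).
Proof.
  intros [e [He ->]]. rewrite star_mul, star_idem by exact He. apply ileq_idem_l, He.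
Qed.

Lemma ileq_dom s t : ileq mul s t -> ileq mul (star s ∙ s) (star t ∙ t).
Proof. intro H1. apply ileq_mul. apply ileq_star, H1. exact H1. Qed.

Lemma ileq_idem s e : idem mul e -> ileq mul s e -> idem mul s.
Proof. intros He [f [Hf ->]]. apply idem_mul; assumption. Qed.

Lemma idem_ileq e s : idem mul e -> (ileq mul e s <-> e = s ∙ e).
Proof.
  intro He. split.
  - intro H1. apply ileq_char in H1. rewrite star_idem, He in H1 by exact He. exact H1.
  - intro E. exists e. split; assumption.
Qed.

Lemma ileq_r_idem s e : idem mul e -> ileq mul (s ∙ e) s.
Proof. intro He. exists e. split. exact He. reflexivity. Qed.

Lemma idem_le_r e f : idem mul e -> idem mul f -> ileq mul (e ∙ f) f.
Proof. intros He Hf. rewrite (idem_comm _ _ He Hf). apply ileq_r_idem, He. Qed.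

Definition img (D : S -> Prop) (g : S -> S) : S -> Prop :=
  fun y => exists x, D x /\ y = g x.

Lemma dir_img C0 C D g : directed mul C0 D -> (forall x, D x -> C (g x)) ->
  (forall x y, ileq mul x y -> ileq mul (g x) (g y)) -> directed mul C (img D g).
Proof.
  intros [_ [[d Hd] Hdir]] HC Hm. split; [|split].
  - intros y [x [Hx ->]]. apply HC, Hx.
  - exists (g d), d. split; [exact Hd | reflexivity].
  - intros y1 y2 [x1 [H1 ->]] [x2 [H2 ->]].
    destruct (Hdir x1 x2 H1 H2) as [z [Hz [L1 L2]]].
    exists (g z). split. exists z. split; [exact Hz|reflexivity].
    split; apply Hm; assumption.
Qed.

Lemma dir_single C y : C y -> directed mul C (fun z => z = y).
Proof.
  intro Hy. split; [|split].
  - intros d ->. exact Hy.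
  - exists y. reflexivity.
  - intros a b -> ->. exists y. split. reflexivity. split; apply ileq_refl.
Qed.

Lemma sup_single C y : C y -> is_sup mul C (fun z => z = y) y.
Proof.
  intro Hy. split; [exact Hy|split].
  - intros d ->. apply ileq_refl.
  - intros u _ Hu. apply Hu. reflexivity.
Qed.

Lemma wb_le C x y : way_below mul C x y -> C y -> ileq mul x y.
Proof.
  intros Hw Hy. destruct (Hw (fun z => z = y) y (dir_single C y Hy) (sup_single C y Hy)
    (ileq_refl y)) as [d [-> Hd]]. exact Hd.
Qed.

Lemma wb_mono C x y y' : way_below mul C x y -> ileq mul y y' -> way_below mul C x y'.
Proof.
  intros Hw Hle D s HD Hs Hy. apply (Hw D s HD Hs). apply ileq_trans with y'; assumption.
Qed.

Lemma sup_dom D a : is_sup mul allS D a ->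
  is_sup mul allS (img D (fun d => star d ∙ d)) (star a ∙ a).
Proof.
  intros [_ [Hub Hl]]. split; [exact I|split].
  - intros y [d [Hd ->]]. apply ileq_dom, Hub, Hd.
  - intros f _ Hf.
    assert (Ha : ileq mul a (a ∙ f)).
    { apply Hl. exact I. intros d Hd.
      assert (E1 : d = a ∙ (star d ∙ d)) by (apply ileq_char, Hub, Hd).
      assert (E2 : star d ∙ d = f ∙ (star d ∙ d)).
      { apply idem_ileq. apply idem_s's. apply Hf. exists d. split; [exact Hd|reflexivity]. }
      exists (star d ∙ d). split. apply idem_s's.
      rewrite E1 at 1. rewrite E2 at 1. rewrite !assoc. reflexivity. }
    apply ileq_char in Ha.
    set (e := star a ∙ a) in *.
    assert (He : idem mul e) by apply idem_s's.
    assert (E : e = e ∙ f ∙ e).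
    { transitivity (star a ∙ (a ∙ f ∙ e)). rewrite <- Ha. reflexivity. unfold e. norm. reflexivity. }
    assert (Ief : idem mul (e ∙ f)).
    { unfold idem. rewrite assoc, <- E. reflexivity. }
    assert (Ife : idem mul (f ∙ e)).
    { unfold idem. transitivity (f ∙ (e ∙ f ∙ e)). norm; reflexivity. rewrite <- E. reflexivity. }
    assert (E3 : e ∙ f = e).
    { transitivity (e ∙ (e ∙ f)). rewrite assoc, He. reflexivity.
      rewrite (idem_comm _ _ He Ief). symmetry. exact E. }
    apply idem_ileq. exact He.
    transitivity (e ∙ (f ∙ e)). rewrite assoc, E3, He. reflexivity.
    rewrite (idem_comm _ _ He Ife), <- assoc, He. reflexivity.
Qed.

Lemma sup_dom_idem D a : directed mul allS D -> is_sup mul allS D a ->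
  directed mul (idem mul) (img D (fun d => star d ∙ d)) /\
  is_sup mul (idem mul) (img D (fun d => star d ∙ d)) (star a ∙ a).
Proof.
  intros HD Ha. split.
  - apply (dir_img allS). exact HD. intros; apply idem_s's. intros; apply ileq_dom; assumption.
  - destruct (sup_dom D a Ha) as [_ [Hub Hl]]. split; [apply idem_s's|split].
    exact Hub. intros u _ Hu. apply Hl. exact I. exact Hu.
Qed.

Lemma below_dom t d a : ileq mul t a -> ileq mul d a ->
  ileq mul (star t ∙ t) (star d ∙ d) -> ileq mul t d.
Proof.
  intros Hta Hda Htd.
  apply ileq_char in Hta. apply ileq_char in Hda.
  apply idem_ileq in Htd; [|apply idem_s's].
  exists (star t ∙ t). split. apply idem_s's.
  rewrite Hda. rewrite <- assoc, <- Htd. exact Hta.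
Qed.

Lemma ch_bw t s : ileq mul t s -> way_below mul (idem mul) (star t ∙ t) (star s ∙ s) ->
  way_below mul allS t s.
Proof.
  intros Hts Hw D a HD Ha Hsa.
  destruct (sup_dom_idem D a HD Ha) as [HD' Ha'].
  destruct (Hw _ _ HD' Ha' (ileq_dom _ _ Hsa)) as [y [[d [Hd ->]] Hy]].
  exists d. split. exact Hd.
  apply below_dom with a. apply ileq_trans with s. exact Hts. exact Hsa.
  apply (proj2 Ha), Hd. exact Hy.
Qed.

Lemma dom_idem e : idem mul e -> star e ∙ e = e.
Proof. intro He. rewrite star_idem by exact He. exact He. Qed.

Lemma wbI_S e f : idem mul e -> idem mul f -> way_below mul (idem mul) e f ->
  way_below mul allS e f.
Proof.
  intros He Hf Hw. apply ch_bw. apply (wb_le _ _ _ Hw Hf).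
  rewrite !dom_idem by assumption. exact Hw.
Qed.

Lemma dir_allS C D : directed mul C D -> directed mul allS D.
Proof. intros [_ [H1 H2]]. split; [intros; exact I| split; assumption]. Qed.

Section Mirror.
Context (Hm : mirror mul).

Lemma sup_IS D u : directed mul (idem mul) D -> is_sup mul (idem mul) D u ->
  is_sup mul allS D u.
Proof.
  intros HD Hu. destruct (Hm D HD (ex_intro _ u Hu)) as [w Hw].
  assert (Hwu : ileq mul w u) by (apply (proj2 (proj2 Hw)); [exact I | apply (proj2 Hu)]).
  assert (Iw : idem mul w) by (apply ileq_idem with u; [apply (proj1 Hu)|exact Hwu]).
  assert (Huw : ileq mul u w) by (apply (proj2 (proj2 Hu)); [exact Iw | apply (proj2 Hw)]).
  split; [exact I|split]. apply (proj2 Hu).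
  intros v _ Hv. apply ileq_trans with w. exact Huw. apply (proj2 (proj2 Hw)). exact I. exact Hv.
Qed.

Lemma wbS_idem e f : idem mul e -> idem mul f -> way_below mul allS e f ->
  way_below mul (idem mul) e f.
Proof.
  intros He Hf Hw D s HD Hs Hfs.
  apply (Hw D s (dir_allS _ _ HD) (sup_IS D s HD Hs) Hfs).
Qed.

Lemma dir1 : stably_continuous mul allS -> stably_continuous mul (idem mul).
Proof.
  intros [Hc Hmul]. split.
  - intros e He. destruct (Hc e I) as [[_ [[t0 Ht0] Hdir]] [_ [Hub Hl]]].
    assert (T1 : forall t, allS t /\ way_below mul allS t e ->
                 idem mul t /\ way_below mul (idem mul) t e).
    { intros t [_ Ht]. assert (It : idem mul t) by
        (apply ileq_idem with e; [exact He | apply (wb_le _ _ _ Ht I)]).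
      split. exact It. apply wbS_idem; assumption. }
    assert (T2 : forall t, idem mul t /\ way_below mul (idem mul) t e ->
                 allS t /\ way_below mul allS t e).
    { intros t [It Ht]. split. exact I. apply wbI_S; assumption. }
    split; [split; [|split]|split; [exact He|split]].
    + intros d Hd; apply Hd.
    + exists t0. apply T1, Ht0.
    + intros x y Hx Hy. destruct (Hdir x y (T2 x Hx) (T2 y Hy)) as [z [Hz [L1 L2]]].
      exists z. split. apply T1, Hz. split; assumption.
    + intros d Hd. apply Hub, T2, Hd.
    + intros u Iu Hu. apply Hl. exact I. intros d Hd. apply Hu, T1, Hd.
  - intros s t s' t' Is It Is' It' W1 W2.
    apply wbS_idem. apply idem_mul; assumption. apply idem_mul; assumption.
    apply Hmul; try exact I; apply wbI_S; assumption.
Qed.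


Section Dir2.
Context (Hsc : stably_continuous mul (idem mul)).

Lemma K1 D u e : directed mul (idem mul) D -> is_sup mul (idem mul) D u -> idem mul e ->
  is_sup mul allS (img D (fun d => e ∙ d)) (e ∙ u).
Proof.
  intros HD Hu He. pose proof (proj1 Hu) as Iu.
  split; [exact I|split].
  - intros y [d [Hd ->]]. apply ileq_mul_l, (proj2 Hu), Hd.
  - intros v _ Hv.
    assert (Ieu : idem mul (e ∙ u)) by (apply idem_mul; assumption).
    destruct (proj1 Hsc (e ∙ u) Ieu) as [HQd HQs].
    apply (proj2 (proj2 (sup_IS _ _ HQd HQs))). exact I.
    intros x [Ix Hx].
    assert (Hle : ileq mul x (e ∙ u)) by apply (wb_le _ _ _ Hx Ieu).
    assert (Hxu := wb_mono _ _ _ _ Hx (idem_le_r _ _ He Iu)).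
    destruct (Hxu D u HD Hu (ileq_refl u)) as [d [Hd Hxd]].
    apply ileq_trans with (e ∙ d).
    + assert (Hxe : ileq mul x e) by (apply ileq_trans with (e ∙ u); [exact Hle| apply ileq_r_idem, Iu]).
      apply idem_ileq in Hxe; [|exact Ix]. apply idem_ileq in Hxd; [|exact Ix].
      apply idem_ileq. exact Ix. rewrite <- assoc, <- Hxd. exact Hxe.
    + apply Hv. exists d. split; [exact Hd|reflexivity].
Qed.

Lemma K2 D u s : directed mul (idem mul) D -> is_sup mul (idem mul) D u ->
  is_sup mul allS (img D (fun d => s ∙ d)) (s ∙ u).
Proof.
  intros HD Hu. split; [exact I|split].
  - intros y [d [Hd ->]]. apply ileq_mul_l, (proj2 Hu), Hd.
  - intros v _ Hv.
    destruct (K1 D u (star s ∙ s) HD Hu (idem_s's s)) as [_ [_ Hl]].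
    assert (H1 : ileq mul (star s ∙ s ∙ u) (star s ∙ v)).
    { apply Hl. exact I. intros y [d [Hd ->]]. rewrite <- assoc.
      apply ileq_mul_l, Hv. exists d. split; [exact Hd|reflexivity]. }
    apply (ileq_mul_l s) in H1. rewrite !assoc, sss in H1.
    apply ileq_trans with (s ∙ star s ∙ v). exact H1. apply ileq_idem_l, idem_ss'.
Qed.

Lemma idem_conj' x f : idem mul f -> idem mul (x ∙ f ∙ star x).
Proof. intro Hf. pose proof (idem_conj (star x) f Hf) as P. rewrite star_star in P. exact P. Qed.

Lemma ileq_sandwich f g w : idem mul f -> idem mul g -> ileq mul (f ∙ w ∙ g) w.
Proof.
  intros Hf Hg. apply ileq_trans with (w ∙ g). apply ileq_mul_r, ileq_idem_l, Hf.
  apply ileq_r_idem, Hg.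
Qed.

Lemma conj_dom r d : idem mul d -> star r ∙ (r ∙ d ∙ star r) ∙ r = star r ∙ r ∙ d.
Proof.
  intro Hd. transitivity ((star r ∙ r) ∙ d ∙ (star r ∙ r)). norm; reflexivity.
  rewrite (comm_p _ _ _ Hd (idem_s's r)).
  rewrite (idem_s's r). reflexivity.
Qed.

Lemma Conj r x y : idem mul x -> idem mul y -> ileq mul y (r ∙ star r) ->
  way_below mul (idem mul) x y -> way_below mul (idem mul) (star r ∙ x ∙ r) (star r ∙ y ∙ r).
Proof.
  intros Ix Iy Hyr Hw D u HD Hu Hle. pose proof (proj1 Hu) as Iu.
  set (D2 := img D (fun d => r ∙ d ∙ star r)).
  assert (HD2 : directed mul (idem mul) D2).
  { apply (dir_img (idem mul)). exact HD. intros d Hd. apply idem_conj', (proj1 HD), Hd.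
    intros a b Hab. apply ileq_mul_r, ileq_mul_l, Hab. }
  assert (Hs2 : is_sup mul (idem mul) D2 (r ∙ u ∙ star r)).
  { split; [apply idem_conj', Iu|split].
    - intros z [d [Hd ->]]. apply ileq_mul_r, ileq_mul_l, (proj2 Hu), Hd.
    - intros w Iw Hwu.
      destruct (K1 D u (star r ∙ r) HD Hu (idem_s's r)) as [_ [_ Hl]].
      assert (H1 : ileq mul (star r ∙ r ∙ u) (star r ∙ w ∙ r)).
      { apply Hl. exact I. intros z [d [Hd ->]]. rewrite <- conj_dom by apply (proj1 HD), Hd.
        apply ileq_mul_r, ileq_mul_l, Hwu. exists d. split; [exact Hd|reflexivity]. }
      apply (ileq_mul_l r), (ileq_mul_r (star r)) in H1.
      apply ileq_trans with (r ∙ (star r ∙ w ∙ r) ∙ star r).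
      + replace (r ∙ u ∙ star r) with (r ∙ (star r ∙ r ∙ u) ∙ star r). exact H1.
        norm. rewrite sss. reflexivity.
      + replace (r ∙ (star r ∙ w ∙ r) ∙ star r) with ((r ∙ star r) ∙ w ∙ (r ∙ star r)).
        apply ileq_sandwich; apply idem_ss'. norm. reflexivity. }
  assert (Hy : ileq mul y (r ∙ u ∙ star r)).
  { replace y with (r ∙ (star r ∙ y ∙ r) ∙ star r) at 1.
    apply ileq_mul_r, ileq_mul_l, Hle.
    apply idem_ileq in Hyr; [|exact Iy].
    transitivity ((r ∙ star r) ∙ y ∙ (r ∙ star r)). norm; reflexivity.
    rewrite (comm_p _ _ _ Iy (idem_ss' r)).
    rewrite (idem_ss' r). symmetry. exact Hyr. }
  destruct (Hw D2 _ HD2 Hs2 Hy) as [z [[d [Hd ->]] Hxz]].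
  exists d. split. exact Hd.
  apply ileq_trans with (star r ∙ (r ∙ d ∙ star r) ∙ r).
  apply ileq_mul_r, ileq_mul_l, Hxz.
  rewrite conj_dom by apply (proj1 HD), Hd. apply ileq_idem_l, idem_s's.
Qed.

Lemma ch_fw t s : way_below mul allS t s ->
  ileq mul t s /\ way_below mul (idem mul) (star t ∙ t) (star s ∙ s).
Proof.
  intro Ht. split. apply (wb_le _ _ _ Ht I).
  intros D u HD Hu Hle.
  assert (HD'' : directed mul allS (img D (fun d => s ∙ d))).
  { apply (dir_img (idem mul)). exact HD. intros; exact I. intros a b Hab. apply ileq_mul_l, Hab. }
  assert (Hsu : ileq mul s (s ∙ u)).
  { apply idem_ileq in Hle; [|apply idem_s's]. exists (star s ∙ s). split. apply idem_s's.
    rewrite <- assoc, <- Hle, assoc, sss. reflexivity. }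
  destruct (Ht _ _ HD'' (K2 D u s HD Hu) Hsu) as [z [[d [Hd ->]] Htz]].
  exists d. split. exact Hd.
  apply ileq_trans with (star (s ∙ d) ∙ (s ∙ d)). apply ileq_dom, Htz.
  pose proof (proj1 HD d Hd) as Id.
  rewrite star_mul, star_idem by exact Id.
  replace (d ∙ star s ∙ (s ∙ d)) with (d ∙ (star s ∙ s ∙ d)) by (norm; reflexivity).
  apply ileq_r_idem, idem_mul. apply idem_s's. exact Id.
Qed.

Lemma dom_sx s x : idem mul x -> ileq mul x (star s ∙ s) -> star (s ∙ x) ∙ (s ∙ x) = x.
Proof.
  intros Ix Hx. apply idem_ileq in Hx; [|exact Ix].
  rewrite star_mul, star_idem by exact Ix.
  transitivity (x ∙ (star s ∙ s ∙ x)). norm; reflexivity.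
  rewrite <- Hx. exact Ix.
Qed.

Lemma dir2 : stably_continuous mul allS.
Proof.
  split.
  - intros s _.
    destruct (proj1 Hsc (star s ∙ s) (idem_s's s)) as [[_ [[x0 Hx0] HQdir]] HQs].
    assert (HQd := proj1 Hsc (star s ∙ s) (idem_s's s)). destruct HQd as [HQd _].
    assert (Pin : forall x, idem mul x /\ way_below mul (idem mul) x (star s ∙ s) ->
                  allS (s ∙ x) /\ way_below mul allS (s ∙ x) s).
    { intros x [Ix Hx]. split. exact I. apply ch_bw. apply ileq_r_idem, Ix.
      rewrite dom_sx. exact Hx. exact Ix. apply (wb_le _ _ _ Hx (idem_s's s)). }
    split; [split; [|split]|split; [exact I|split]].
    + intros; exact I.
    + exists (s ∙ x0). apply Pin, Hx0.
    + intros t1 t2 [_ H1] [_ H2].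
      destruct (ch_fw _ _ H1) as [L1 W1]. destruct (ch_fw _ _ H2) as [L2 W2].
      destruct (HQdir (star t1 ∙ t1) (star t2 ∙ t2)) as [z [Hz [Z1 Z2]]].
      split. apply idem_s's. exact W1. split. apply idem_s's. exact W2.
      exists (s ∙ z). split. apply Pin, Hz.
      split.
      * apply ileq_char in L1. apply idem_ileq in Z1; [|apply idem_s's].
        exists (star t1 ∙ t1). split. apply idem_s's. rewrite L1 at 1. rewrite Z1 at 1.
        rewrite !assoc. reflexivity.
      * apply ileq_char in L2. apply idem_ileq in Z2; [|apply idem_s's].
        exists (star t2 ∙ t2). split. apply idem_s's. rewrite L2 at 1. rewrite Z2 at 1.
        rewrite !assoc. reflexivity.
    + intros t [_ Ht]. apply (wb_le _ _ _ Ht I).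
    + intros v _ Hv. destruct (K2 _ _ s HQd HQs) as [_ [_ Hl]].
      rewrite assoc, sss in Hl. apply Hl. exact I.
      intros y [x [Hx ->]]. apply Hv, Pin, Hx.
  - intros s1 t1 s2 t2 _ _ _ _ W1 W2.
    destruct (ch_fw _ _ W1) as [L1 V1]. destruct (ch_fw _ _ W2) as [L2 V2].
    apply ch_bw. apply ileq_mul; assumption.
    set (r := t2) in *.
    set (e1 := star s1 ∙ s1) in *. set (E1 := star t1 ∙ t1) in *.
    set (e2 := star s2 ∙ s2) in *. set (E2 := star r ∙ r) in *.
    assert (Ie1 : idem mul e1) by apply idem_s's.
    assert (Ie2 : idem mul e2) by apply idem_s's.
    assert (IE1 : idem mul E1) by apply idem_s's.
    assert (IE2 : idem mul E2) by apply idem_s's.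
    assert (C1 : way_below mul (idem mul) (r ∙ e2 ∙ star r) (r ∙ star r)).
    { pose proof (Conj (star r) e2 E2 Ie2 IE2) as P. rewrite star_star in P.
      replace (r ∙ star r) with (r ∙ E2 ∙ star r). apply P. apply ileq_refl. exact V2.
      unfold E2. norm. rewrite sss. reflexivity. }
    assert (C2 : way_below mul (idem mul) (e1 ∙ (r ∙ e2 ∙ star r)) (E1 ∙ (r ∙ star r))).
    { apply (proj2 Hsc); try assumption. apply idem_conj', Ie2. apply idem_ss'. }
    assert (C3 := Conj r _ _ (idem_mul _ _ Ie1 (idem_conj' r e2 Ie2))
                    (idem_mul _ _ IE1 (idem_ss' r)) (idem_le_r _ _ IE1 (idem_ss' r)) C2).
    assert (Eq1 : star r ∙ (E1 ∙ (r ∙ star r)) ∙ r = star (t1 ∙ r) ∙ (t1 ∙ r)).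
    { rewrite star_mul. unfold E1. norm. rewrite sss_p. reflexivity. }
    assert (Eq2 : star r ∙ (e1 ∙ (r ∙ e2 ∙ star r)) ∙ r = star (s1 ∙ s2) ∙ (s1 ∙ s2)).
    { assert (Hs2 : s2 = r ∙ e2) by (apply ileq_char; exact L2).
      assert (He2 : e2 = e2 ∙ E2).
      { pose proof (wb_le _ _ _ V2 IE2) as P. apply idem_ileq in P; [|exact Ie2].
        rewrite (idem_comm _ _ Ie2 IE2). exact P. }
      set (c := star r ∙ e1 ∙ r).
      assert (Ic : idem mul c) by (apply idem_conj, Ie1).
      assert (Hst : star s2 = e2 ∙ star r).
      { rewrite Hs2 at 1. rewrite star_mul, star_idem by exact Ie2. reflexivity. }
      rewrite star_mul. transitivity (c ∙ e2).
      - transitivity (c ∙ (e2 ∙ E2)). unfold c, E2; norm; reflexivity.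
        rewrite <- He2. reflexivity.
      - rewrite Hst. replace (s1 ∙ s2) with (s1 ∙ (r ∙ e2)) by (rewrite <- Hs2; reflexivity).
        transitivity (e2 ∙ c ∙ e2). 2: (unfold c, e1; norm; reflexivity).
        rewrite (idem_comm _ _ Ie2 Ic), idem_p by exact Ie2. reflexivity. }
    rewrite <- Eq1, <- Eq2. exact C3.
Qed.

End Dir2.
End Mirror.
End Alg.

Theorem corollary5p4 (S : Type) (mul : S -> S -> S) :
  inverse_semigroup mul -> mirror mul ->
  (stably_continuous mul (@allS S) <-> stably_continuous mul (idem mul)).
Proof.
  intros H Hm. split.
  - apply (dir1 mul H Hm).
  - apply (dir2 mul H Hm).
Qed.
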